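(* Let $x \in \mathbb{R}^n$ be deterministic, $y\in\mathbb{R}^n$ deterministic, and $f:\mathbb{R}^n\to\mathbb{R}^n$. Let $\tilde a,\tilde b,\tilde c$ be random vectors in $\mathbb{R}^n$ such that all $3n$ entries are mutually independent, $\mathbb{E}[\tilde a_i] = \mathbb{E}[\tilde b_i] = \mathbb{E}[\tilde c_i] = x_i$ for all $i$, and for each $i$ the variables $\tilde a_i,\tilde b_i,\tilde c_i$ have common finite central moments up to order six; denote by $\sigma_i^2$ their common variance and by $\mu_i^{[4]}$ their common fourth central moment. Let $\widetilde{\mathrm{uSE}}_i := (\tilde a_i - f(y)_i)^2 - \frac{(\tilde b_i - \tilde c_i)^2}{2}$. Then for every $1\le i\le n$, $$\mathrm{Var}[\widetilde{\mathrm{uSE}}_i] \ge \frac{\mu_i^{[4]} + \sigma_i^4}{2}.$$ *)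

(* Defs.v *)
From HB Require Import structures.
From mathcomp Require Import all_boot all_order all_algebra.
From mathcomp Require Import all_classical all_reals all_analysis.
Set Implicit Arguments. Unset Strict Implicit. Unset Printing Implicit Defensive.
Import Order.TTheory GRing.Theory Num.Theory.
Local Open Scope classical_set_scope.
Local Open Scope ring_scope.

Definition mutually_independent d (T : measurableType d) (R : realType)
  (P : probability T R) (I : finType) (X : I -> T -> R) : Prop :=
  forall (J : {set I}) (B : I -> set R),
    (forall j, measurable (B j)) ->
    P (\bigcap_(j in [set j | j \in J]) (X j @^-1` B j)) =
    (\prod_(j in J) fine (P (X j @^-1` B j)))%:E.

Definition abc_family d (T : measurableType d) (R : realType) (n : nat)
  (a b c : 'I_n -> T -> R) : 'I_n + 'I_n + 'I_n -> T -> R :=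
  fun k => match k with
           | inl (inl i) => a i
           | inl (inr i) => b i
           | inr i => c i
           end.

Definition cmoment d (T : measurableType d) (R : realType)
  (P : probability T R) (X : T -> R) (m : R) (k : nat) : \bar R :=
  'E_P[fun w => (X w - m) ^+ k].

Definition uSE d (T : measurableType d) (R : realType) (n : nat)
  (a b c : 'I_n -> T -> R) (fy : 'rV[R]_n) (i : 'I_n) : T -> R :=
  fun w => (a i w - fy ord0 i) ^+ 2 - (b i w - c i w) ^+ 2 / 2.

(* Main.v *)
Require Import Defs.
From HB Require Import structures.
From mathcomp Require Import all_boot all_order all_algebra.
From mathcomp Require Import all_classical all_reals all_analysis.
From mathcomp Require Import measurable_realfun simple_functions measurable_fun_approximation.
From mathcomp Require Import ring lra.
Import Order.TTheory GRing.Theory Num.Theory.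
Local Open Scope classical_set_scope.
Local Open Scope ring_scope.

Module Helpers.
Set Implicit Arguments. Unset Strict Implicit. Unset Printing Implicit Defensive.
Import numFieldNormedType.Exports.

Section indep.
Context (R : realType) (d : measure_display) (T : measurableType d) (P : probability T R).
Local Open Scope ereal_scope.
Import HBNNSimple.

Lemma indic_comp (X : T -> R) (A : set R) w :
  \1_A (X w) = \1_(X @^-1` A) w :> R.
Proof. by rewrite !indicE; congr (_%:R); apply/idP/idP; rewrite !inE. Qed.

Lemma K0 (X : T -> R) (mX : measurable_fun setT X) (h : T -> R)
  (mh : measurable_fun setT h) (h0 : forall w, (0 <= h w)%R) (c : R)
  (Hc : forall B, measurable B ->
     \int[P]_w (\1_(X @^-1` B) w * h w)%:E = P (X @^-1` B) * c%:E)
  (phi : {nnsfun R >-> R}) :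
  \int[P]_w (phi (X w) * h w)%:E =
  (\sum_(r \in range phi) r%:E * P (X @^-1` (phi @^-1` [set r]))) * c%:E.
Proof.
have mpre r : measurable (X @^-1` (phi @^-1` [set r])).
  by rewrite -(setTI (X @^-1` _)); apply: mX.
have nn r z : (0 <= r * \1_(phi @^-1` [set r]) z)%R.
  by rewrite -lee_fin EFinM nnfun_muleindic_ge0.
under eq_integral => w _.
  rewrite fimfunE EFinM -fsumEFin// ge0_mule_fsuml; last first.
    by move=> r; rewrite lee_fin.
  over.
rewrite ge0_integral_fsum//; last 2 first.
  - move=> r; apply/measurable_EFinP; apply: measurable_funM => //.
    apply: measurable_funM => //; apply: measurableT_comp => //.
  - by move=> r w _; rewrite -EFinM lee_fin mulr_ge0.
rewrite ge0_mule_fsuml; last first.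
  by move=> r; have [r0|r0] := leP 0%R r; [rewrite mule_ge0|
     rewrite preimage_nnfun0// preimage_set0 measure0 mule0].
apply: eq_fsbigr => r _.
under eq_integral => w _ do rewrite indic_comp -EFinM -mulrA EFinM.
have [r0|r0] := leP 0%R r; last first.
  rewrite preimage_nnfun0// preimage_set0 measure0 mule0 mul0e.
  by apply: integral0_eq => w _; rewrite indicE in_set0 mul0r mule0.
rewrite (@ge0_integralZl_EFin _ _ _ P _ measurableT (fun w => (\1_(X @^-1` (phi @^-1` [set r])) w * h w)%:E))//; last 2 first.
  - by move=> w _; rewrite lee_fin mulr_ge0.
  - apply/measurable_EFinP; apply: measurable_funM => //.
by rewrite Hc ?muleA//; apply: measurable_preimage_set1.
Qed.

Lemma K (X : T -> R) (mX : measurable_fun setT X) (h : T -> R)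
  (mh : measurable_fun setT h) (h0 : forall w, (0 <= h w)%R) (c : R)
  (Hc : forall B, measurable B ->
     \int[P]_w (\1_(X @^-1` B) w * h w)%:E = P (X @^-1` B) * c%:E)
  (g : R -> R) (mg : measurable_fun setT g) (g0 : forall r, (0 <= g r)%R) :
  \int[P]_w (g (X w) * h w)%:E = \int[P]_w (g (X w))%:E * c%:E.
Proof.
have mgE : measurable_fun setT (EFin \o g) by exact/measurable_EFinP.
pose phi := nnsfun_approx measurableT mgE.
have cvphi r : (fun n => (phi n r)%:E) @ \oo --> (g r)%:E.
  by apply: (@cvg_nnsfun_approx _ _ _ setT measurableT _ mgE) => // x _; rewrite lee_fin.
have ndphi r n m : (n <= m)%N -> (phi n r <= phi m r)%R.
  by move=> nm; exact/lefP/nd_nnsfun_approx.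
have L (h' : T -> R) : measurable_fun setT h' -> (forall w, 0 <= h' w)%R ->
    \int[P]_w (g (X w) * h' w)%:E =
    limn (fun n => \int[P]_w (phi n (X w) * h' w)%:E).
  move=> mh' h'0; rewrite -monotone_convergence //; last 3 first.
  - move=> n; apply/measurable_EFinP; apply: measurable_funM => //.
    exact: measurableT_comp.
  - by move=> n w _; rewrite lee_fin mulr_ge0 // h'0.
  - by move=> w _ n m nm; rewrite lee_fin ler_wpM2r // ?h'0 ?ndphi.
  apply: eq_integral => w _; apply/esym/cvg_lim => //; rewrite EFinM.
  under eq_fun do rewrite EFinM.
  exact: cvgeZr.
have Hc1 B : measurable B ->
    \int[P]_w (\1_(X @^-1` B) w * 1)%:E = P (X @^-1` B) * 1%:E.
  move=> mB; under eq_integral do rewrite mulr1.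
  rewrite integral_indic//; last by rewrite -[X @^-1` B]setTI; exact: mX.
  by rewrite setIT mule1.
under [X in _ = X * _]eq_integral do rewrite -[g (X _)]mulr1.
rewrite L// L//.
under eq_fun do rewrite (K0 mX mh h0 Hc).
under [X in _ = limn X * _]eq_fun do rewrite (K0 mX (measurable_cst _) (fun=> ler01) Hc1) mule1.
rewrite limeMr//.
apply: ereal_nondecreasing_is_cvgn => n m nm.
rewrite -[X in X <= _]mule1 -[X in _ <= X]mule1.
rewrite -(K0 mX (measurable_cst _) (fun=> ler01) Hc1).
rewrite -(K0 mX (measurable_cst _) (fun=> ler01) Hc1).
apply: ge0_le_integral => //.
- by move=> w _; rewrite lee_fin mulr1.
- by apply/measurable_EFinP; apply: measurable_funM => //; exact: measurableT_comp.
- by apply/measurable_EFinP; apply: measurable_funM => //; exact: measurableT_comp.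
- by move=> w _; rewrite lee_fin !mulr1 ndphi.
Qed.

Lemma indicIw (A B : set T) w : (\1_A w * \1_B w = \1_(A `&` B) w :> R)%R.
Proof. by rewrite indicI. Qed.

Lemma PE (S : set T) : measurable S -> P S = (fine (P S))%:E.
Proof. by move=> mS; rewrite fineK// fin_num_measure. Qed.

Lemma intE (f : T -> R) : P.-integrable setT (EFin \o f) ->
  \int[P]_w (f w)%:E = (fine (\int[P]_w (f w)%:E))%:E.
Proof. by move=> fi; rewrite fineK//; exact: (integrable_fin_num measurableT fi). Qed.

Lemma ge0_integrable_fin (f : T -> R) : measurable_fun setT f ->
  (forall w, 0 <= f w)%R -> \int[P]_w (f w)%:E \is a fin_num ->
  P.-integrable setT (EFin \o f).
Proof.
move=> mf f0 ffin; apply/integrableP; split; first exact/measurable_EFinP.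
under eq_integral do rewrite gee0_abs ?lee_fin//.
by rewrite ltey_eq ffin.
Qed.

Lemma mpre (X : T -> R) (mX : measurable_fun setT X) (B : set R) :
  measurable B -> measurable (X @^-1` B).
Proof. by move=> mB; rewrite -[X @^-1` B]setTI; exact: mX. Qed.

Section NN3.
Variables (X1 X2 X3 : T -> R).
Hypotheses (m1 : measurable_fun setT X1) (m2 : measurable_fun setT X2)
  (m3 : measurable_fun setT X3).
Hypothesis Hind : forall B1 B2 B3 : set R,
  measurable B1 -> measurable B2 -> measurable B3 ->
  P (X1 @^-1` B1 `&` X2 @^-1` B2 `&` X3 @^-1` B3) =
  P (X1 @^-1` B1) * P (X2 @^-1` B2) * P (X3 @^-1` B3).
Variables (g1 g2 g3 : R -> R).
Hypotheses (mg1 : measurable_fun setT g1) (mg2 : measurable_fun setT g2)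
  (mg3 : measurable_fun setT g3).
Hypotheses (g10 : forall r, (0 <= g1 r)%R) (g20 : forall r, (0 <= g2 r)%R)
  (g30 : forall r, (0 <= g3 r)%R).
Hypotheses (i1 : P.-integrable setT (EFin \o (g1 \o X1)))
  (i2 : P.-integrable setT (EFin \o (g2 \o X2)))
  (i3 : P.-integrable setT (EFin \o (g3 \o X3))).

Let I1 := fine (\int[P]_w (g1 (X1 w))%:E).
Let I2 := fine (\int[P]_w (g2 (X2 w))%:E).
Let I3 := fine (\int[P]_w (g3 (X3 w))%:E).
Let p (S : set T) := fine (P S).

Let step1 B1 B2 : measurable B1 -> measurable B2 ->
  \int[P]_w (g3 (X3 w) * (\1_(X1 @^-1` B1) w * \1_(X2 @^-1` B2) w))%:E =
  (I3 * (p (X1 @^-1` B1) * p (X2 @^-1` B2)))%:E.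
Proof.
move=> mB1 mB2.
rewrite (@K X3 m3 _ _ _ (p (X1 @^-1` B1) * p (X2 @^-1` B2))) //.
- by rewrite (intE i3) EFinM.
- apply: measurable_funM; apply: measurable_indic; exact: mpre.
- move=> B mB.
  under eq_integral do rewrite mulrA !indicIw.
  rewrite integral_indic//; last first.
    by apply: measurableI; [apply: measurableI|]; exact: mpre.
  rewrite setIT -setIA setIC; apply: (etrans (Hind mB1 mB2 mB)).
  rewrite (PE (mpre m1 mB1)) (PE (mpre m2 mB2)).
  rewrite (PE (mpre m3 mB)) -!EFinM; congr (_%:E); rewrite /p; ring.
Qed.

Let step2 B1 : measurable B1 ->
  \int[P]_w (g2 (X2 w) * (\1_(X1 @^-1` B1) w * g3 (X3 w)))%:E =
  (I2 * (p (X1 @^-1` B1) * I3))%:E.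
Proof.
move=> mB1.
rewrite (@K X2 m2 _ _ _ (p (X1 @^-1` B1) * I3)) //.
- by rewrite (intE i2) EFinM.
- apply: measurable_funM; first by apply: measurable_indic; exact: mpre.
  exact: measurableT_comp.
- by move=> w; rewrite mulr_ge0.
- move=> B mB.
  rewrite (eq_integral (fun w => (g3 (X3 w) * (\1_(X1 @^-1` B1) w * \1_(X2 @^-1` B) w))%:E)); last by move=> w _; congr (_%:E); ring.
  rewrite step1// (PE (mpre m2 mB)) -EFinM; congr (_%:E).
  rewrite /p; ring.
Qed.

Lemma NN3 :
  \int[P]_w (g1 (X1 w) * g2 (X2 w) * g3 (X3 w))%:E = (I1 * I2 * I3)%:E.
Proof.
under eq_integral do rewrite -mulrA.
rewrite (@K X1 m1 _ _ _ (I2 * I3)) //.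
- by rewrite (intE i1) -EFinM mulrA.
- by apply: measurable_funM; exact: measurableT_comp.
- by move=> w; rewrite mulr_ge0.
- move=> B mB.
  rewrite (eq_integral (fun w => (g2 (X2 w) * (\1_(X1 @^-1` B) w * g3 (X3 w)))%:E)); last by move=> w _; congr (_%:E); ring.
  rewrite step2// (PE (mpre m1 mB)) -EFinM; congr (_%:E).
  rewrite /p; ring.
Qed.

End NN3.

Definition Int (f : T -> R) := P.-integrable setT (EFin \o f).
Definition Ex (f : T -> R) : R := fine (\int[P]_w (f w)%:E).

Lemma IntE f : Int f -> \int[P]_w (f w)%:E = (Ex f)%:E.
Proof. exact: intE. Qed.

Lemma Int_ext f g : (forall w, f w = g w) -> Int f -> Int g.
Proof. by move=> fg; rewrite (_ : g = f)//; apply/funext => w; rewrite fg. Qed.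

Lemma Ex_ext f g : (forall w, f w = g w) -> Ex f = Ex g.
Proof. by move=> fg; rewrite (_ : g = f)//; apply/funext => w; rewrite fg. Qed.

Lemma IntD f g : Int f -> Int g -> Int (fun w => f w + g w)%R.
Proof.
move=> fi gi; apply: (eq_integrable measurableT _ _ _ (integrableD measurableT fi gi)).
by move=> w _; rewrite /= EFinD.
Qed.

Lemma ExD f g : Int f -> Int g -> Ex (fun w => f w + g w)%R = (Ex f + Ex g)%R.
Proof.
move=> fi gi; rewrite /Ex; under eq_integral do rewrite EFinD.
by rewrite (integralD measurableT fi gi) (IntE fi) (IntE gi).
Qed.

Lemma IntZ k f : Int f -> Int (fun w => k * f w)%R.
Proof.
move=> fi; apply: (eq_integrable measurableT _ _ _ (integrableZl measurableT k fi)).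
by move=> w _; rewrite /= EFinM.
Qed.

Lemma ExZ k f : Int f -> Ex (fun w => k * f w)%R = (k * Ex f)%R.
Proof.
move=> fi; rewrite /Ex; under eq_integral do rewrite EFinM.
by rewrite (integralZl measurableT fi) (IntE fi).
Qed.

Lemma IntB f g : Int f -> Int g -> Int (fun w => f w - g w)%R.
Proof.
move=> fi gi; apply: (Int_ext (f := fun w => f w + (-1) * g w)%R).
  by move=> w; rewrite mulN1r.
by apply: IntD => //; exact: IntZ.
Qed.

Lemma ExB f g : Int f -> Int g -> Ex (fun w => f w - g w)%R = (Ex f - Ex g)%R.
Proof.
move=> fi gi; rewrite -(Ex_ext (f := fun w => f w + (-1) * g w)%R).
  by rewrite ExD ?ExZ ?mulN1r//; exact: IntZ.
by move=> w; rewrite mulN1r.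
Qed.

Lemma Int_cst k : Int (fun=> k).
Proof.
apply/integrableP; split; first exact/measurable_EFinP.
rewrite (eq_integral (cst `|k|%:E)); last by [].
by rewrite integral_cst//= probability_setT mule1 ltry.
Qed.

Lemma Ex_cst k : Ex (fun=> k) = k.
Proof.
by rewrite /Ex (eq_integral (cst k%:E))// integral_cst//= probability_setT mule1.
Qed.

Lemma Int_le (f g : T -> R) : measurable_fun setT f -> (forall w, `|f w| <= `|g w|)%R ->
  Int g -> Int f.
Proof.
move=> mf fg gi; apply: le_integrable gi => //.
  exact/measurable_EFinP.
by move=> w _; rewrite lee_fin.
Qed.

Lemma Ex_ge0 (f : T -> R) : (forall w, 0 <= f w)%R -> (0 <= Ex f)%R.
Proof. by move=> f0; rewrite /Ex fine_ge0// integral_ge0// => w _; rewrite lee_fin. Qed.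

Definition posf (x : R) := ((x + `|x|) / 2)%R.
Definition negf (x : R) := ((`|x| - x) / 2)%R.

Lemma posf_ge0 x : (0 <= posf x)%R.
Proof. by rewrite /posf; have [x0|x0] := leP 0%R x; [rewrite ger0_norm|rewrite ltr0_norm]; lra. Qed.
Lemma negf_ge0 x : (0 <= negf x)%R.
Proof. by rewrite /negf; have [x0|x0] := leP 0%R x; [rewrite ger0_norm|rewrite ltr0_norm]; lra. Qed.
Lemma posf_le x : (`|posf x| <= `|x|)%R.
Proof.
rewrite ger0_norm ?posf_ge0// /posf.
by have [x0|x0] := leP 0%R x; [rewrite ger0_norm|rewrite ltr0_norm]; lra.
Qed.
Lemma negf_le x : (`|negf x| <= `|x|)%R.
Proof.
rewrite ger0_norm ?negf_ge0// /negf.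
by have [x0|x0] := leP 0%R x; [rewrite ger0_norm|rewrite ltr0_norm]; lra.
Qed.
Lemma posnegE x : x = (posf x - negf x)%R.
Proof. rewrite /posf /negf; lra. Qed.
Lemma mposf : measurable_fun setT posf.
Proof.
rewrite /posf; apply: measurable_funM => //; apply: measurable_funD => //.

Qed.
Lemma mnegf : measurable_fun setT negf.
Proof.
rewrite /negf; apply: measurable_funM => //; apply: measurable_funB => //.

Qed.


Lemma split_lemma (u L : T -> R) (c : R) :
  measurable_fun setT u -> Int u ->
  Int (fun w => posf (u w) * L w)%R -> Int (fun w => negf (u w) * L w)%R ->
  Ex (fun w => posf (u w) * L w)%R = (Ex (posf \o u) * c)%R ->
  Ex (fun w => negf (u w) * L w)%R = (Ex (negf \o u) * c)%R ->
  Int (fun w => u w * L w)%R /\ Ex (fun w => u w * L w)%R = (Ex u * c)%R.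
Proof.
move=> mu ui ipL inL Hp Hn.
have ip : Int (posf \o u) by apply: (Int_le (measurableT_comp mposf mu)) ui => w; exact: posf_le.
have iN : Int (negf \o u) by apply: (Int_le (measurableT_comp mnegf mu)) ui => w; exact: negf_le.
have eu w : (posf (u w) * L w - negf (u w) * L w = u w * L w)%R.
  by rewrite -mulrBl -posnegE.
split; first exact: (Int_ext eu (IntB ipL inL)).
rewrite -(Ex_ext eu) ExB// Hp Hn -mulrBl -ExB//.
by congr (_ * _)%R; apply: Ex_ext => w /=; rewrite -posnegE.
Qed.

Section S3.
Variables (X1 X2 X3 : T -> R).
Hypotheses (m1 : measurable_fun setT X1) (m2 : measurable_fun setT X2)
  (m3 : measurable_fun setT X3).
Hypothesis Hind : forall B1 B2 B3 : set R,
  measurable B1 -> measurable B2 -> measurable B3 ->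
  P (X1 @^-1` B1 `&` X2 @^-1` B2 `&` X3 @^-1` B3) =
  P (X1 @^-1` B1) * P (X2 @^-1` B2) * P (X3 @^-1` B3).

Definition Prop3 (g1 g2 g3 : R -> R) :=
  Int (fun w => g1 (X1 w) * g2 (X2 w) * g3 (X3 w))%R /\
  Ex (fun w => g1 (X1 w) * g2 (X2 w) * g3 (X3 w))%R =
  (Ex (g1 \o X1) * Ex (g2 \o X2) * Ex (g3 \o X3))%R.

Lemma NNp (g1 g2 g3 : R -> R) :
  measurable_fun setT g1 -> measurable_fun setT g2 -> measurable_fun setT g3 ->
  (forall r, 0 <= g1 r)%R -> (forall r, 0 <= g2 r)%R -> (forall r, 0 <= g3 r)%R ->
  Int (g1 \o X1) -> Int (g2 \o X2) -> Int (g3 \o X3) -> Prop3 g1 g2 g3.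
Proof.
move=> mg1 mg2 mg3 g10 g20 g30 i1 i2 i3.
have E := NN3 m1 m2 m3 Hind mg1 mg2 mg3 g10 g20 g30 i1 i2 i3.
split; last by rewrite /Ex E.
apply: ge0_integrable_fin.
- apply: measurable_funM; [apply: measurable_funM|]; exact: measurableT_comp.
- by move=> w; rewrite !mulr_ge0.
- by rewrite E.
Qed.

Lemma S1 (g1 g2 g3 : R -> R) :
  measurable_fun setT g1 -> measurable_fun setT g2 -> measurable_fun setT g3 ->
  (forall r, 0 <= g2 r)%R -> (forall r, 0 <= g3 r)%R ->
  Int (g1 \o X1) -> Int (g2 \o X2) -> Int (g3 \o X3) -> Prop3 g1 g2 g3.
Proof.
move=> mg1 mg2 mg3 g20 g30 i1 i2 i3.
have mu : measurable_fun setT (g1 \o X1) by exact: measurableT_comp.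
have ip : Int (posf \o (g1 \o X1)) by apply: (Int_le (measurableT_comp mposf mu)) i1 => w; exact: posf_le.
have iN : Int (negf \o (g1 \o X1)) by apply: (Int_le (measurableT_comp mnegf mu)) i1 => w; exact: negf_le.
have [Ip Ep] := NNp (measurableT_comp mposf mg1) mg2 mg3 (fun r => posf_ge0 _) g20 g30 ip i2 i3.
have [In En] := NNp (measurableT_comp mnegf mg1) mg2 mg3 (fun r => negf_ge0 _) g20 g30 iN i2 i3.
have := @split_lemma (g1 \o X1) (fun w => g2 (X2 w) * g3 (X3 w))%R (Ex (g2 \o X2) * Ex (g3 \o X3))%R mu i1.
have e1 (h : R -> R) w : (h (X1 w) * g2 (X2 w) * g3 (X3 w) = h (X1 w) * (g2 (X2 w) * g3 (X3 w)))%R by rewrite mulrA.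
case.
- exact: (Int_ext (e1 _) Ip).
- exact: (Int_ext (e1 _) In).
- by rewrite -(Ex_ext (e1 (posf \o g1))) Ep mulrA.
- by rewrite -(Ex_ext (e1 (negf \o g1))) En mulrA.
move=> I E; split; first exact: (Int_ext (fun w => esym (e1 _ w)) I).
by rewrite (Ex_ext (e1 g1)) -mulrA; exact: E.
Qed.


Lemma S2 (g1 g2 g3 : R -> R) :
  measurable_fun setT g1 -> measurable_fun setT g2 -> measurable_fun setT g3 ->
  (forall r, 0 <= g3 r)%R ->
  Int (g1 \o X1) -> Int (g2 \o X2) -> Int (g3 \o X3) -> Prop3 g1 g2 g3.
Proof.
move=> mg1 mg2 mg3 g30 i1 i2 i3.
have mu : measurable_fun setT (g2 \o X2) by exact: measurableT_comp.
have ip : Int (posf \o (g2 \o X2)) by apply: (Int_le (measurableT_comp mposf mu)) i2 => w; exact: posf_le.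
have iN : Int (negf \o (g2 \o X2)) by apply: (Int_le (measurableT_comp mnegf mu)) i2 => w; exact: negf_le.
have [Ip Ep] := S1 mg1 (measurableT_comp mposf mg2) mg3 (fun r => posf_ge0 _) g30 i1 ip i3.
have [In En] := S1 mg1 (measurableT_comp mnegf mg2) mg3 (fun r => negf_ge0 _) g30 i1 iN i3.
have e2 (h : R -> R) w : (h (X2 w) * (g1 (X1 w) * g3 (X3 w)) = g1 (X1 w) * h (X2 w) * g3 (X3 w))%R.
  by rewrite mulrCA mulrA.
have := @split_lemma (g2 \o X2) (fun w => g1 (X1 w) * g3 (X3 w))%R (Ex (g1 \o X1) * Ex (g3 \o X3))%R mu i2.
case.
- exact: (Int_ext (fun w => esym (e2 (posf \o g2) w)) Ip).
- exact: (Int_ext (fun w => esym (e2 (negf \o g2) w)) In).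
- by rewrite (Ex_ext (e2 (posf \o g2))) Ep mulrAC mulrC.
- by rewrite (Ex_ext (e2 (negf \o g2))) En mulrAC mulrC.
move=> I E; split; first exact: (Int_ext (e2 g2) I).
by rewrite -(Ex_ext (e2 g2)) E mulrCA mulrA.
Qed.

Lemma S3 (g1 g2 g3 : R -> R) :
  measurable_fun setT g1 -> measurable_fun setT g2 -> measurable_fun setT g3 ->
  Int (g1 \o X1) -> Int (g2 \o X2) -> Int (g3 \o X3) -> Prop3 g1 g2 g3.
Proof.
move=> mg1 mg2 mg3 i1 i2 i3.
have mu : measurable_fun setT (g3 \o X3) by exact: measurableT_comp.
have ip : Int (posf \o (g3 \o X3)) by apply: (Int_le (measurableT_comp mposf mu)) i3 => w; exact: posf_le.
have iN : Int (negf \o (g3 \o X3)) by apply: (Int_le (measurableT_comp mnegf mu)) i3 => w; exact: negf_le.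
have [Ip Ep] := S2 mg1 mg2 (measurableT_comp mposf mg3) (fun r => posf_ge0 _) i1 i2 ip.
have [In En] := S2 mg1 mg2 (measurableT_comp mnegf mg3) (fun r => negf_ge0 _) i1 i2 iN.
have e3 (h : R -> R) w : (h (X3 w) * (g1 (X1 w) * g2 (X2 w)) = g1 (X1 w) * g2 (X2 w) * h (X3 w))%R.
  by rewrite mulrC.
have := @split_lemma (g3 \o X3) (fun w => g1 (X1 w) * g2 (X2 w))%R (Ex (g1 \o X1) * Ex (g2 \o X2))%R mu i3.
case.
- exact: (Int_ext (fun w => esym (e3 (posf \o g3) w)) Ip).
- exact: (Int_ext (fun w => esym (e3 (negf \o g3) w)) In).
- by rewrite (Ex_ext (e3 (posf \o g3))) Ep mulrC.
- by rewrite (Ex_ext (e3 (negf \o g3))) En mulrC.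
move=> I E; split; first exact: (Int_ext (e3 g3) I).
by rewrite -(Ex_ext (e3 g3)) E mulrC.
Qed.

End S3.

Lemma pow_bound (y : R) k : (0 <= y)%R -> (k <= 6)%N -> (y ^+ k <= 1 + y ^+ 6)%R.
Proof.
move=> y0 k6; have [y1|y1] := leP y 1%R.
  by apply: (le_trans (exprn_ile1 _ y0 y1)); rewrite lerDl exprn_ge0.
have y1' : (1 <= y)%R by exact: ltW.
apply: ler_wpDl => //.
rewrite -(subnKC k6) exprD ler_peMr ?exprn_ge0//.
exact: (exprn_ege1 _ y1').
Qed.

Lemma Lint (X : T -> R) (x0 : R) : X \in Lfun P 6%:E ->
  forall k, (k <= 6)%N -> Int (fun w => (X w - x0) ^+ k)%R.
Proof.
move=> LX k k6.
have LY : (X \- cst x0)%R \in Lfun P 6%:E.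
  rewrite (_ : (X \- cst x0 = X - cst x0)%R)//; apply: rpredB => //.
  - by rewrite lee_fin ler1n.
  - by move=> H; exact: Lfun_cst.
have mY : measurable_fun setT (X \- cst x0)%R.
  by move: LY; rewrite inE => /andP[]; rewrite inE.
have i6 := Lfun_integrable (ltW (ltr1n _ 6)) LY.
have i6' : Int (fun w => `|X w - x0| ^+ 6)%R.
  apply: (eq_integrable measurableT _ _ _ i6) => w _ /=.
  by rewrite -[6%R]/(6%:R) powR_mulrn.
apply: (@Int_le _ (fun w => 1 + `|X w - x0| ^+ 6)%R).
- exact: measurable_funX.
- move=> w; rewrite normrX (ger0_norm (addr_ge0 ler01 (exprn_ge0 _ _)))//.
  exact: pow_bound.
- exact: IntD (Int_cst _) i6'.
Qed.


Lemma ExE (f : T -> R) : fine 'E_P[f] = Ex f.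
Proof. by rewrite unlock. Qed.

Section Main.
Variables (A B C : T -> R).
Hypotheses (mA : measurable_fun setT A) (mB : measurable_fun setT B)
  (mC : measurable_fun setT C).
Hypothesis Hind : forall B1 B2 B3 : set R,
  measurable B1 -> measurable B2 -> measurable B3 ->
  P (A @^-1` B1 `&` B @^-1` B2 `&` C @^-1` B3) =
  P (A @^-1` B1) * P (B @^-1` B2) * P (C @^-1` B3).
Variable x0 : R.
Hypotheses (LA : A \in Lfun P 6%:E) (LB : B \in Lfun P 6%:E) (LC : C \in Lfun P 6%:E).
Hypotheses (EA : 'E_P[A] = x0%:E) (EB : 'E_P[B] = x0%:E) (EC : 'E_P[C] = x0%:E).
Hypotheses (HB : forall k, (1 <= k <= 6)%N -> cmoment P B x0 k = cmoment P A x0 k)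
  (HC : forall k, (1 <= k <= 6)%N -> cmoment P C x0 k = cmoment P A x0 k).

Definition mom k := Ex (fun w => (A w - x0) ^+ k)%R.
Definition M' k : R := match k with 0 => 1 | 1 => 0 | 2 => mom 2 | 3 => mom 3
  | 4 => mom 4 | _ => 0 end%R.

Lemma mom_gen (X : T -> R) : X \in Lfun P 6%:E -> 'E_P[X] = x0%:E ->
  (forall k, (1 <= k <= 6)%N -> cmoment P X x0 k = cmoment P A x0 k) ->
  forall k, (k <= 4)%N -> Ex (fun w => (X w - x0) ^+ k)%R = M' k.
Proof.
move=> LX EX HX [|[|k]] k4.
- by rewrite (Ex_ext (g := fun=> 1%R)) ?Ex_cst.
- rewrite (Ex_ext (g := fun w => X w - (fun=> x0) w)%R); last by move=> w; rewrite expr1.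
  have iX : Int X.
    apply: (Int_ext (f := fun w => ((X w - x0) ^+ 1 + x0)%R)).
      by move=> w; rewrite expr1 subrK.
    by apply: IntD; [exact: (@Lint _ x0 LX 1 isT)|exact: Int_cst].
  by rewrite ExB ?Ex_cst//; [rewrite -(ExE X) EX /= subrr|exact: Int_cst].
- have -> : Ex (fun w => (X w - x0) ^+ k.+2)%R = mom k.+2.
    by rewrite /mom -!ExE; have := HX k.+2; rewrite /cmoment => ->//; rewrite ltnS (leq_trans k4).
  by case: k k4 => [|[|[|]]].
Qed.

Lemma momA k : (k <= 4)%N -> Ex (fun w => (A w - x0) ^+ k)%R = M' k.
Proof. by apply: mom_gen. Qed.
Lemma momB k : (k <= 4)%N -> Ex (fun w => (B w - x0) ^+ k)%R = M' k.
Proof. exact: mom_gen. Qed.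
Lemma momC k : (k <= 4)%N -> Ex (fun w => (C w - x0) ^+ k)%R = M' k.
Proof. exact: mom_gen. Qed.

Definition term := (R * nat * nat * nat)%type.
Definition mono (t : term) w := (t.1.1.1 * ((A w - x0) ^+ t.1.1.2 *
  (B w - x0) ^+ t.1.2 * (C w - x0) ^+ t.2))%R.
Definition polyv (s : seq term) w := (\sum_(t <- s) mono t w)%R.
Definition polyE (s : seq term) := (\sum_(t <- s) t.1.1.1 * M' t.1.1.2 * M' t.1.2 * M' t.2)%R.
Definition ok4 (t : term) := [&& (t.1.1.2 <= 4)%N, (t.1.2 <= 4)%N & (t.2 <= 4)%N].

Lemma mexp k : measurable_fun setT (fun r : R => (r - x0) ^+ k)%R.
Proof. by apply: measurable_funX; apply: measurable_funB. Qed.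

Lemma poly_ok s : all ok4 s -> Int (polyv s) /\ Ex (polyv s) = polyE s.
Proof.
elim: s => [_|t s IH /= /andP[/and3P[t1 t2 t3] /IH[Is Es]]].
  rewrite /polyv /polyE big_nil.
  have e : forall w, (0 = \sum_(t <- [::]) mono t w)%R by move=> w; rewrite big_nil.
  by split; [apply: (Int_ext e); exact: Int_cst|rewrite -(Ex_ext e) Ex_cst].
have := S3 mA mB mC Hind (mexp t.1.1.2) (mexp t.1.2) (mexp t.2)
  (@Lint _ x0 LA _ (leq_trans t1 (isT : (4 <= 6)%N)))
  (@Lint _ x0 LB _ (leq_trans t2 (isT : (4 <= 6)%N)))
  (@Lint _ x0 LC _ (leq_trans t3 (isT : (4 <= 6)%N))).
case=> Im Em.
have e : forall w, (mono t w + polyv s w = polyv (t :: s) w)%R.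
  by move=> w; rewrite /polyv big_cons.
have Imt : Int (mono t) by apply: IntZ Im.
split; first exact: (Int_ext e (IntD Imt Is)).
rewrite -(Ex_ext e) ExD// Es /polyE big_cons; congr (_ + _)%R.
rewrite /mono ExZ// Em /= (momA t1) (momB t2) (momC t3).
by rewrite !mulrA.
Qed.


Definition mulT (t1 t2 : term) : term := (t1.1.1.1 * t2.1.1.1,
  Nat.add t1.1.1.2 t2.1.1.2, Nat.add t1.1.2 t2.1.2, Nat.add t1.2 t2.2)%R.
Definition sq (s : seq term) := [seq mulT t1 t2 | t1 <- s, t2 <- s].

Lemma polyv_sq s w : polyv (sq s) w = (polyv s w ^+ 2)%R.
Proof.
rewrite /polyv /sq expr2 big_distrl /=.
rewrite big_allpairs_dep /=.
apply: eq_bigr => t1 _; rewrite big_distrr; apply: eq_bigr => t2 _.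
by rewrite /mono /mulT /= !exprD; ring.
Qed.

Variable y0 : R.
Let U := (fun w => (A w - y0) ^+ 2 - (B w - C w) ^+ 2 / 2)%R.
Let dl := (x0 - y0)%R.

Let T4 (c : R) (p q r : nat) : term := (c, p, q, r).
Let sU : seq term := [:: T4 1 2 0 0; T4 (2 * dl) 1 0 0; T4 (dl ^+ 2) 0 0 0;
  T4 (- 2^-1) 0 2 0; T4 1 0 1 1; T4 (- 2^-1) 0 0 2]%R.
Let sD : seq term := [:: T4 1 2 0 0; T4 (2 * dl) 1 0 0;
  T4 (- 2^-1) 0 2 0; T4 (- 2^-1) 0 0 2; T4 1 0 1 1]%R.
Let sP : seq term := [:: T4 1 2 0 0; T4 (2 * dl) 1 0 0; T4 (- mom 2) 0 0 0]%R.

Lemma EU : Ex U = (dl ^+ 2)%R.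
Proof.
have [_ E] := @poly_ok sU isT.
rewrite (Ex_ext (g := polyv sU)); last first.
  by move=> w; rewrite /U /polyv /sU !big_cons big_nil /mono /= /dl; field.
by rewrite E /polyE /sU !big_cons big_nil /=; field.
Qed.

Lemma main_ineq : (((mom 4 + mom 2 ^+ 2) / 2)%:E <= 'V_P[U])%E.
Proof.
have [ID ED] := @poly_ok (sq sD) isT.
have [IP EP] := @poly_ok (sq sP) isT.
have HP : (0 <= polyE (sq sP))%R.
  by rewrite -EP; apply: Ex_ge0 => w; rewrite polyv_sq sqr_ge0.
have -> : 'V_P[U] = (Ex (polyv (sq sD)))%:E.
  rewrite /variance !unlock -IntE//; apply: eq_integral => w _.
  rewrite polyv_sq; congr (_%:E).
  apply: (@etrans _ _ ((U w - dl ^+ 2) ^+ 2)%R); first by rewrite expr2 -EU.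
  by rewrite /U /polyv /sD !big_cons big_nil /mono /= /dl; field.
rewrite lee_fin ED.
move: HP; rewrite /polyE /sq !big_allpairs_dep !big_cons !big_nil /=.
move=> HP; lra.
Qed.

End Main.
End indep.

End Helpers.
Import Helpers.

Theorem lemmaE4 (R : realType) (d : measure_display) (T : measurableType d)
  (P : probability T R) (n : nat)
  (x y : 'rV[R]_n) (f : 'rV[R]_n -> 'rV[R]_n)
  (a b c : 'I_n -> {RV P >-> R})
  (Hindep : mutually_independent P
              (abc_family (fun i => a i : T -> R) (fun i => b i : T -> R)
                          (fun i => c i : T -> R)))
  (Hmean : forall i, [/\ 'E_P[a i] = (x ord0 i)%:E,
                         'E_P[b i] = (x ord0 i)%:E &
                         'E_P[c i] = (x ord0 i)%:E]%E)
  (Hfin : forall i, [/\ (a i : T -> R) \in Lfun P 6%:E,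
                        (b i : T -> R) \in Lfun P 6%:E &
                        (c i : T -> R) \in Lfun P 6%:E])
  (Hcommon : forall i (k : nat), (1 <= k <= 6)%N ->
       cmoment P (a i) (x ord0 i) k = cmoment P (b i) (x ord0 i) k /\
       cmoment P (b i) (x ord0 i) k = cmoment P (c i) (x ord0 i) k) :
  forall i : 'I_n,
    let sigma2 := fine 'V_P[a i] in
    let mu4 := fine (cmoment P (a i) (x ord0 i) 4) in
    (((mu4 + sigma2 ^+ 2) / 2)%:E <=
       'V_P[uSE (fun j => a j : T -> R) (fun j => b j : T -> R)
                (fun j => c j : T -> R) (f y) i])%E.
Proof.
move=> i; cbv zeta.
have [EA EB EC] := Hmean i.
have [LA LB LC] := Hfin i.
set x0 := x ord0 i.
have mA : measurable_fun setT (a i : T -> R) by exact: measurable_funPT.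
have mB : measurable_fun setT (b i : T -> R) by exact: measurable_funPT.
have mC : measurable_fun setT (c i : T -> R) by exact: measurable_funPT.
have HB k : (1 <= k <= 6)%N -> cmoment P (b i) x0 k = cmoment P (a i) x0 k.
  by move=> hk; rewrite (Hcommon i k hk).1.
have HC k : (1 <= k <= 6)%N -> cmoment P (c i) x0 k = cmoment P (a i) x0 k.
  by move=> hk; rewrite -(Hcommon i k hk).2 (Hcommon i k hk).1.
have Hind : forall B1 B2 B3 : set R,
    measurable B1 -> measurable B2 -> measurable B3 ->
    P ((a i : T -> R) @^-1` B1 `&` (b i : T -> R) @^-1` B2 `&` (c i : T -> R) @^-1` B3) =
    (P ((a i : T -> R) @^-1` B1) * P ((b i : T -> R) @^-1` B2) * P ((c i : T -> R) @^-1` B3))%E.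
  move=> B1 B2 B3 mB1 mB2 mB3.
  pose Bf (k : 'I_n + 'I_n + 'I_n) : set R := match k with
    | inl (inl j) => if j == i then B1 else setT
    | inl (inr j) => if j == i then B2 else setT
    | inr j => if j == i then B3 else setT end.
  have mBf k : measurable (Bf k).
    by case: k => [[j|j]|j] /=; case: (j == i).
  have := Hindep [set: 'I_n + 'I_n + 'I_n]%SET Bf mBf.
  set F := abc_family _ _ _.
  have -> : \bigcap_(j in [set j | j \in [set: 'I_n + 'I_n + 'I_n]%SET]) (F j @^-1` Bf j) =
      (a i : T -> R) @^-1` B1 `&` (b i : T -> R) @^-1` B2 `&` (c i : T -> R) @^-1` B3.
    apply/seteqP; split => w.
    - move=> H.
      have hT k : [set` [set: 'I_n + 'I_n + 'I_n]%SET] k.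
        first [by rewrite inE | exact: (in_setT k) | by move=> /=; rewrite inE | by apply/setTP].
      have h1 := H (inl (inl i)) (hT _).
      have h2 := H (inl (inr i)) (hT _).
      have h3 := H (inr i) (hT _).
      by rewrite /= eqxx in h1 h2 h3.
    - move=> [[h1 h2] h3] k _; case: k => [[j|j]|j] /=; case: eqP => [->|_] //.
  move=> ->.
  rewrite (PE P (mpre mA mB1)) (PE P (mpre mB mB2)) (PE P (mpre mC mB3)) -!EFinM.
  congr (_%:E).
  rewrite (eq_bigl (fun=> true)); last by move=> k; first [by rewrite inE | exact: (in_setT k) | by apply/setTP].
  rewrite !big_sumType /=.
  have one (j : 'I_n) (G : T -> R) (Bx : set R) : j != i ->
      fine (P (G @^-1` (if j == i then Bx else setT))) = 1%R.
    by move=> /negbTE ->; rewrite preimage_setT probability_setT.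
  rewrite (bigD1 i) //= eqxx big1 ?mulr1; last by move=> j /one ->.
  rewrite (bigD1 i) //= eqxx big1 ?mulr1; last by move=> j /one ->.
  rewrite (bigD1 i) //= eqxx big1 ?mulr1; last by move=> j /one ->.
  by [].
have := main_ineq mA mB mC Hind LA LB LC EA EB EC HB HC (f y ord0 i).
have -> : fine 'V_P[a i] = mom P (a i : T -> R) x0 2.
  rewrite /variance covariance.unlock EA /= ExE /mom; apply: Ex_ext => w.
  by rewrite expr2.
have -> : fine (cmoment P (a i) (x ord0 i) 4) = mom P (a i : T -> R) x0 4.
  by rewrite /cmoment ExE.
by [].
Qed.
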